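(* Let $C$ be a normal, closed cone with nonempty interior in a real Banach space. Let $f:\operatorname{int} C\to\operatorname{int} C$ be order-preserving and subhomogeneous, and suppose that $C$ is regular, or $f$ is $\gamma$-condensing, or $f$ is $\tau$-condensing. If $u$ is a fixed point of $f$ and $\operatorname{Fix}(f)$ is bounded in $d_T$, then for any $R>r>0$ with $\operatorname{Fix}(f)\subset B_r(u)$ there is $k\in\mathbb{N}$ such that $f^k(\overline{B_R(u)})\subset B_r(u)$. In particular, if $f$ has a unique fixed point $u\in\operatorname{int}C$, then $f^k(x)\to u$ for all $x\in\operatorname{int} C$.
   Context: A closed cone $C$ (closed convex, $\lambda C\subseteq C$ for $\lambda\ge0$, $C\cap(-C)=\{0\}$) induces the order $x\le y$ iff $y-x\in C$. $C$ is normal if there is $\kappa$ with $\|x\|\le\kappa\|y\|$ whenever $0\le x\le y$; regular if every decreasing sequence in $C$ converges. Thompson's metric on $\operatorname{int}C$: $d_T(x,y)=\log\inf\{\beta\ge1:\beta^{-1}x\le y\le\beta x\}$; $B_R(u)=\{y\in\operatorname{int}C: d_T(u,y)<R\}$, and $\overline{B_R(u)}=[e^{-R}u,e^Ru]=\{z: e^{-R}u\le z\le e^Ru\}$. $f$ is order-preserving if $x\le y\Rightarrow f(x)\le f(y)$; subhomogeneous if $f(tx)\le tf(x)$ for $t\ge1$. $\gamma$ and $\tau$ are Kuratowski's measures of noncompactness for the norm and for $d_T$ respectively ($\inf$ of $d$ such that the set has a finite cover by sets of diameter $\le d$); a continuous map is $\gamma$- (resp. $\tau$-) condensing if it strictly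 decreases $\gamma$ (resp. $\tau$) on every bounded (resp. $d_T$-bounded) set of positive measure. *)

(* Defs.v *)
From HB Require Import structures.
From mathcomp Require Import all_boot all_order all_algebra.
From mathcomp Require Import all_classical all_reals all_analysis.
Set Implicit Arguments. Unset Strict Implicit. Unset Printing Implicit Defensive.
Import Order.TTheory GRing.Theory Num.Theory.
Import numFieldNormedType.Exports.
Local Open Scope classical_set_scope.
Local Open Scope ring_scope.

Section ConeDefs.
Variables (R : realType) (V : normedModType R).

Definition closed_cone (C : set V) : Prop :=
  [/\ closed C,
      (forall x y (l : R), C x -> C y -> 0 <= l -> l <= 1 -> C (l *: x + (1 - l) *: y)),
      (forall x (l : R), C x -> 0 <= l -> C (l *: x)) &
      (forall x, C x -> C (- x) -> x = 0)].

Definition cle (C : set V) (x y : V) : Prop := C (y - x).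

Definition normal_cone (C : set V) : Prop :=
  exists kappa : R, forall x y, cle C 0 x -> cle C x y -> `|x| <= kappa * `|y|.

Definition regular_cone (C : set V) : Prop :=
  forall u : nat -> V, (forall n, C (u n)) -> (forall n, cle C (u n.+1) (u n)) ->
    exists l : V, u @ \oo --> l.

Definition thompson (C : set V) (x y : V) : R :=
  ln (inf [set b : R | 1 <= b /\ cle C (b^-1 *: x) y /\ cle C y (b *: x)]).

Definition tball (C : set V) (u : V) (r : R) : set V :=
  [set y | interior C y /\ thompson C u y < r].

(* closed Thompson ball, \overline{B_R(u)} = [e^{-R} u, e^R u] *)
Definition tcball (C : set V) (u : V) (r : R) : set V :=
  [set z | cle C (expR (- r) *: u) z /\ cle C z (expR r *: u)].

Definition order_preserving_on (C : set V) (f : V -> V) : Prop :=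
  forall x y, interior C x -> interior C y -> cle C x y -> cle C (f x) (f y).

Definition subhomogeneous_on (C : set V) (f : V -> V) : Prop :=
  forall x (t : R), interior C x -> 1 <= t -> cle C (f (t *: x)) (t *: f x).

Definition fixpts (C : set V) (f : V -> V) : set V :=
  [set x | interior C x /\ f x = x].

Definition thompson_bounded (C : set V) (S : set V) : Prop :=
  exists M : R, forall x y, S x -> S y -> thompson C x y <= M.

Definition norm_bounded (S : set V) : Prop :=
  exists M : R, forall x, S x -> `|x| <= M.

(* Kuratowski measure of noncompactness w.r.t. a distance function [dist]:
   inf of d >= 0 such that S is covered by finitely many subsets of diameter <= d
   (subsets may be taken inside S w.l.o.g.). Value in \bar R (+oo if no cover). *)
Definition kuratowski (dist : V -> V -> R) (S : set V) : \bar R :=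
  ereal_inf [set d%:E | d in
    [set d : R | 0 <= d /\
      exists (n : nat) (A : nat -> set V),
        (forall i, A i `<=` S) /\
        (forall i x y, A i x -> A i y -> dist x y <= d) /\
        (forall x, S x -> exists i, (i < n)%N /\ A i x)]].

Definition gamma_mnc (S : set V) : \bar R := kuratowski (fun x y => `|x - y|) S.
Definition tau_mnc (C : set V) (S : set V) : \bar R := kuratowski (thompson C) S.

Definition gamma_condensing (C : set V) (f : V -> V) : Prop :=
  {within interior C, continuous f} /\
  forall S, S `<=` interior C -> norm_bounded S -> (0 < gamma_mnc S)%E ->
    (gamma_mnc (f @` S) < gamma_mnc S)%E.

Definition tau_condensing (C : set V) (f : V -> V) : Prop :=
  {within interior C, continuous f} /\
  forall S, S `<=` interior C -> thompson_bounded C S -> (0 < tau_mnc C S)%E ->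
    (tau_mnc C (f @` S) < tau_mnc C S)%E.

End ConeDefs.

(* Main.v *)
Require Import Defs.
From HB Require Import structures.
From mathcomp Require Import all_boot all_order all_algebra.
From mathcomp Require Import all_classical all_reals all_analysis.
From mathcomp Require Import lra ring.
Import Order.TTheory GRing.Theory Num.Theory.
Import numFieldNormedType.Exports.
Local Open Scope classical_set_scope.
Local Open Scope ring_scope.

Section Basics.
Local Set Implicit Arguments. Local Unset Strict Implicit.
Variables (R : realType) (V : completeNormedModType R) (C : set V).
Hypothesis hC : closed_cone C.
Hypothesis hC0 : C 0.

Lemma Cadd x y : C x -> C y -> C (x + y).
Proof.
case: hC => _ hconv hsc _ hx hy.
have h := hconv x y (2^-1) hx hy.
have h2 : C (2^-1 *: x + (1 - 2^-1) *: y) by apply: h; lra.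
have := hsc _ 2 h2; rewrite scalerDr !scalerA.
have -> : (2 : R) * 2^-1 = 1 by field.
have -> : (2 : R) * (1 - 2^-1) = 1 by field.
by rewrite !scale1r; apply; lra.
Qed.

Lemma Cscale t x : C x -> 0 <= t -> C (t *: x).
Proof. by case: hC => _ _ hsc _; apply: hsc. Qed.

Lemma cle_refl x : cle C x x.
Proof. by rewrite /cle subrr. Qed.

Lemma cle_trans x y z : cle C x y -> cle C y z -> cle C x z.
Proof. rewrite /cle => h1 h2; have := Cadd h2 h1; by rewrite addrA subrK. Qed.

Lemma cle_scale t x y : 0 <= t -> cle C x y -> cle C (t *: x) (t *: y).
Proof. by rewrite /cle -scalerBr => ht h; apply: Cscale. Qed.

Lemma cle_antisym x y : cle C x y -> cle C y x -> x = y.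
Proof.
rewrite /cle => h1 h2; case: hC => _ _ _ hpt.
apply/eqP; rewrite eq_sym -subr_eq0; apply/eqP; apply: hpt h1 _.
by rewrite opprB.
Qed.

Lemma cle_sc t s x : C x -> t <= s -> cle C (t *: x) (s *: x).
Proof. by rewrite /cle -scalerBl => hx hts; apply: Cscale => //; rewrite subr_ge0. Qed.

Lemma C_approx v : (forall e : R, 0 < e -> exists z, C z /\ `|z - v| < e) -> C v.
Proof.
move=> H; case: hC => hcl _ _ _; apply: hcl => B /nbhs_ballP [e e0 hB].
have [z [Cz hz]] := H e e0; exists z; split => //; apply: hB.
by rewrite -ball_normE /= distrC.
Qed.

Lemma intP x : interior C x -> exists2 e : R, 0 < e & forall v, `|v| < e -> C (x + v).
Proof.
move=> /nbhs_ballP [e e0 he]; exists e => // v hv; apply: he.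
by rewrite -ball_normE /= opprD addrA subrr add0r normrN.
Qed.

Lemma intI x (e : R) : 0 < e -> (forall v, `|v| < e -> C (x + v)) -> interior C x.
Proof.
move=> e0 H; apply/nbhs_ballP; exists e => // y; rewrite -ball_normE /= => hy.
by have := H (y - x); rewrite addrCA subrr addr0; apply; rewrite distrC.
Qed.

Lemma int_sub x : interior C x -> C x.
Proof. exact: interior_subset. Qed.

Lemma int_add x c : interior C x -> C c -> interior C (x + c).
Proof.
move=> /intP [e e0 he] hc; apply: (intI e0) => v hv.
by rewrite addrAC; apply: Cadd => //; apply: he.
Qed.

Lemma int_le x y : interior C x -> cle C x y -> interior C y.
Proof. by move=> hx hxy; have := int_add hx hxy; rewrite addrC subrK. Qed.

Lemma int_scale t x : 0 < t -> interior C x -> interior C (t *: x).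
Proof.
move=> t0 /intP [e e0 he]; apply: (@intI _ (t * e)); first exact: mulr_gt0.
move=> v hv.
have -> : t *: x + v = t *: (x + t^-1 *: v).
  by rewrite scalerDr scalerA mulfV ?scale1r // gt_eqF.
apply: Cscale; last exact: ltW.
apply: he; rewrite normrZ ger0_norm ?invr_ge0 ?ltW //.
by rewrite ltr_pdivrMl.
Qed.

Lemma int_absorb x y : interior C x -> exists2 eta : R, 0 < eta & C (x - eta *: y).
Proof.
move=> /intP [e e0 he].
have hy : 0 < `|y| + 1 by rewrite ltr_wpDl.
exists (e / (2 * (`|y| + 1))); first by apply: divr_gt0 => //; apply: mulr_gt0.
apply: he; rewrite normrN normrZ ger0_norm; last first.
  by apply: ltW; apply: divr_gt0 => //; apply: mulr_gt0.
rewrite mulrAC ltr_pdivrMr; last by apply: mulr_gt0.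
have := normr_ge0 y; nra.
Qed.

Lemma int_eps l (eps : R) : interior C l -> 0 < eps ->
  exists2 d : R, 0 < d & forall w, `|w| < d -> C (eps *: l + w).
Proof. by move=> hl he; apply: intP; apply: int_scale. Qed.

Lemma comparable x y : interior C x -> interior C y ->
  exists b : R, [/\ 1 <= b, cle C (b^-1 *: x) y & cle C y (b *: x)].
Proof.
move=> hx hy.
have [e1 e10 h1] := int_absorb x hy.
have [e2 e20 h2] := int_absorb y hx.
have Cx := int_sub hx.
set b := Num.max 1 (Num.max e1^-1 e2^-1).
have b1 : 1 <= b by rewrite le_max lexx.
have b0 : 0 < b by apply: lt_le_trans b1.
have be1 : e1^-1 <= b by rewrite le_max le_max lexx orbT.
have be2 : e2^-1 <= b by rewrite le_max le_max lexx !orbT.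
exists b; split => //.
- apply: (@cle_trans _ (e1 *: x)); first apply: cle_sc => //.
    by rewrite -(invrK e1) ler_pV2 // ?inE ?unitfE ?gt_eqF ?invr_gt0.
  by rewrite /cle.
- apply: (@cle_trans _ (e2^-1 *: x)); last by apply: cle_sc.
  have : cle C (e2 *: y) x by rewrite /cle.
  have e2i : 0 <= e2^-1 by rewrite invr_ge0 ltW.
  move/(cle_scale e2i).
  by rewrite scalerA mulVf ?gt_eqF // scale1r.
Qed.

Definition TS (x y : V) := [set b : R | 1 <= b /\ cle C (b^-1 *: x) y /\ cle C y (b *: x)].

Lemma TS_inf x y b : TS x y b -> 1 <= inf (TS x y) /\ inf (TS x y) <= b.
Proof.
move=> hb; split.
  by apply: lb_le_inf; [exists b | move=> z []].
by apply: ge_inf => //; exists 1 => z [].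
Qed.

Lemma th_le x y b : 1 <= b -> cle C (b^-1 *: x) y -> cle C y (b *: x) ->
  thompson C x y <= ln b.
Proof.
move=> b1 h1 h2; have [i1 i2] := TS_inf (conj b1 (conj h1 h2) : TS x y b).
rewrite /thompson -/(TS x y) ler_ln // posrE; lra.
Qed.

Lemma th_lt x y r : interior C x -> interior C y -> thompson C x y < r ->
  exists b : R, [/\ 1 <= b, b < expR r, cle C (b^-1 *: x) y & cle C y (b *: x)].
Proof.
move=> hx hy; have [b0 [h1 h2 h3]] := comparable hx hy.
have [i1 _] := TS_inf (conj h1 (conj h2 h3) : TS x y b0).
rewrite /thompson -/(TS x y) => hlt.
have : inf (TS x y) < expR r.
  by rewrite -(@lnK _ (inf (TS x y))) ?ltr_expR // posrE; lra.
move/inf_lt => [|b [hb1 [hb2 hb3]] hb]; first by exists b0.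
by exists b.
Qed.

Lemma th_ge0 x y : interior C x -> interior C y -> 0 <= thompson C x y.
Proof.
move=> hx hy; have [b0 [h1 h2 h3]] := comparable hx hy.
have [i1 _] := TS_inf (conj h1 (conj h2 h3) : TS x y b0).
by apply: ln_ge0.
Qed.

Lemma swap b x y : 0 < b -> cle C (b^-1 *: x) y -> cle C y (b *: x) ->
  cle C (b^-1 *: y) x /\ cle C x (b *: y).
Proof.
move=> b0 h1 h2; split.
  have bi : 0 <= b^-1 by rewrite invr_ge0 ltW.
  have := cle_scale bi h2.
  by rewrite scalerA mulVf ?gt_eqF // scale1r.
have := cle_scale (ltW b0) h1.
by rewrite scalerA mulfV ?gt_eqF // scale1r.
Qed.

End Basics.

Lemma ev_dist (R : realType) (V : normedModType R) (s : nat -> V) l (e : R) :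
  s @ \oo --> l -> 0 < e -> exists N, forall n, (N <= n)%N -> `|l - s n| < e.
Proof. move=> hl e0; case: (cvgr_dist_lt _ _ hl e e0) => N _ HN; exists N => n hn; exact: HN. Qed.
Arguments ev_dist {R V s l e}.

Section Fmap.
Local Set Implicit Arguments. Local Unset Strict Implicit.
Variables (R : realType) (V : completeNormedModType R) (C : set V) (f : V -> V).
Hypothesis hC : closed_cone C.
Hypothesis hC0 : C 0.
Hypothesis hf : forall x, interior C x -> interior C (f x).
Hypothesis hop : order_preserving_on C f.
Hypothesis hsub : subhomogeneous_on C f.

Lemma C_approx_c v w : (forall c : R, 1 < c -> C (c *: v - w)) -> C (v - w).
Proof.
move=> H; apply: (C_approx hC) => e e0.
have hv : 0 < `|v| + 1 by rewrite ltr_wpDl.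
set c := 1 + e / (`|v| + 1).
have c1 : 1 < c by rewrite /c ltrDl divr_gt0.
exists (c *: v - w); split; first exact: H.
rewrite opprB addrA subrK -[X in c *: v - X]scale1r -scalerBl normrZ.
rewrite /c addrAC subrr add0r ger0_norm; last by apply/ltW/divr_gt0.
rewrite mulrAC ltr_pdivrMr //; have := normr_ge0 v; nra.
Qed.

Lemma sub_lo t x : interior C x -> 0 < t -> t <= 1 -> cle C (t *: f x) (f (t *: x)).
Proof.
move=> hx t0 t1.
have htx := int_scale hC t0 hx.
have ti : 1 <= t^-1 by rewrite invf_ge1.
have := hsub htx ti; rewrite scalerA mulVf ?gt_eqF // scale1r => h.
have := cle_scale hC (ltW t0) h.
by rewrite [t *: (t^-1 *: _)]scalerA mulfV ?gt_eqF // scale1r.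
Qed.

Lemma iter_int k x : interior C x -> interior C (iter k f x).
Proof. by move=> hx; elim: k => //= k IH; apply: hf. Qed.

Lemma iter_mono k x y : interior C x -> interior C y -> cle C x y ->
  cle C (iter k f x) (iter k f y).
Proof.
move=> hx hy hxy; elim: k => //= k IH.
by apply: hop => //; apply: iter_int.
Qed.

Lemma mono_inc (s : nat -> V) : (forall k, cle C (s k) (s k.+1)) ->
  forall m n, (m <= n)%N -> cle C (s m) (s n).
Proof.
move=> h m n /subnK <-; elim: (n - m)%N => [|d IH]; first by rewrite add0n; exact: cle_refl.
by rewrite addSn; apply: (cle_trans hC) IH (h _).
Qed.

Lemma mono_dec (s : nat -> V) : (forall k, cle C (s k.+1) (s k)) ->
  forall m n, (m <= n)%N -> cle C (s n) (s m).
Proof.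
move=> h m n /subnK <-; elim: (n - m)%N => [|d IH]; first by rewrite add0n; exact: cle_refl.
by rewrite addSn; apply: (cle_trans hC) (h _) IH.
Qed.

Lemma fix_inc (s : nat -> V) l : (forall k, interior C (s k)) ->
  (forall k, s k.+1 = f (s k)) -> (forall k, cle C (s k) (s k.+1)) ->
  s @ \oo --> l ->
  [/\ interior C l, f l = l, (forall k, cle C (s k) l) &
      (forall c : R, 1 < c -> exists N, forall k, (N <= k)%N -> cle C l (c *: s k))].
Proof.
move=> hi hs hm hl.
have mono := mono_inc hm.
have hle : forall k, cle C (s k) l.
  move=> k; apply: (C_approx hC) => e e0.
  have [N HN] := ev_dist hl e0.
  exists (s (maxn N k) - s k); split; first by apply: mono; exact: leq_maxr.
  by rewrite opprB addrA subrK distrC; apply: HN; exact: leq_maxl.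
have il : interior C l := int_le hC (hi 0) (hle 0).
have happ : forall c : R, 1 < c -> exists N, forall k, (N <= k)%N -> cle C l (c *: s k).
  move=> c c1; have c0 : 0 < c by lra.
  have c1' : 0 < c - 1 by lra.
  have [d d0 hd] := int_eps hC il c1'.
  have [N HN] := ev_dist hl (divr_gt0 d0 c0).
  exists N => k hk; rewrite /cle.
  have -> : c *: s k - l = (c - 1) *: l + c *: (s k - l).
    by rewrite scalerBl scale1r scalerBr [RHS]addrC [RHS]addrA subrK.
  apply: hd; rewrite normrZ ger0_norm ?ltW // distrC -ltr_pdivlMl //.
  by rewrite mulrC; apply: HN.
have fl1 : cle C l (f l).
  apply: (C_approx hC) => e e0.
  have [N HN] := ev_dist hl e0.
  exists (f l - s N.+1); split.
    by rewrite hs; apply: hop => //; apply: hle.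
  by rewrite opprB addrC addrA subrK; apply: HN; exact: leqnSn.
have fl2 : cle C (f l) l.
  rewrite /cle; apply: C_approx_c => c c1; have c0 : 0 < c by lra.
  have [N HN] := happ c c1.
  have h1 : cle C (f l) (f (c *: s N)).
    apply: hop => //; first exact: int_scale.
    exact: HN.
  have h2 : cle C (f (c *: s N)) (c *: f (s N)) by apply: hsub => //; lra.
  have h3 : cle C (c *: f (s N)) (c *: l).
    by rewrite -hs; apply: cle_scale => //; lra.
  exact: (cle_trans hC) h1 (cle_trans hC h2 h3).
split => //; exact: (cle_antisym hC).
Qed.

Lemma fix_dec (s : nat -> V) l lo : interior C lo -> (forall k, cle C lo (s k)) ->
  (forall k, interior C (s k)) ->
  (forall k, s k.+1 = f (s k)) -> (forall k, cle C (s k.+1) (s k)) ->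
  s @ \oo --> l ->
  [/\ interior C l, f l = l, (forall k, cle C l (s k)) &
      (forall c : R, 1 < c -> exists N, forall k, (N <= k)%N -> cle C (s k) (c *: l))].
Proof.
move=> hlo hlos hi hs hm hl.
have mono := mono_dec hm.
have hle : forall k, cle C l (s k).
  move=> k; apply: (C_approx hC) => e e0.
  have [N HN] := ev_dist hl e0.
  exists (s k - s (maxn N k)); split; first by apply: mono; exact: leq_maxr.
  by rewrite opprB addrC addrA subrK; apply: HN; exact: leq_maxl.
have hlol : cle C lo l.
  apply: (C_approx hC) => e e0.
  have [N HN] := ev_dist hl e0.
  exists (s N - lo); split; first exact: hlos.
  by rewrite opprB addrA subrK distrC; apply: HN.
have il : interior C l := int_le hC hlo hlol.
have happ : forall c : R, 1 < c -> exists N, forall k, (N <= k)%N -> cle C (s k) (c *: l).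
  move=> c c1.
  have c1' : 0 < c - 1 by lra.
  have [d d0 hd] := int_eps hC il c1'.
  have [N HN] := ev_dist hl d0.
  exists N => k hk; rewrite /cle.
  have -> : c *: l - s k = (c - 1) *: l + (l - s k).
    by rewrite scalerBl scale1r addrA subrK.
  by apply: hd; apply: HN.
have fl1 : cle C (f l) l.
  apply: (C_approx hC) => e e0.
  have [N HN] := ev_dist hl e0.
  exists (s N.+1 - f l); split.
    by rewrite hs; apply: hop => //; apply: hle.
  by rewrite opprB addrA subrK distrC; apply: HN; exact: leqnSn.
have fl2 : cle C l (f l).
  rewrite /cle; apply: C_approx_c => c c1; have c0 : 0 < c by lra.
  have [N HN] := happ c c1.
  have h1 : cle C l (s N.+1) by apply: hle.
  have h2 : cle C (f (s N)) (f (c *: l)).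
    apply: hop => //; first exact: int_scale.
    exact: HN.
  have h3 : cle C (f (c *: l)) (c *: f l) by apply: hsub => //; lra.
  rewrite hs in h1.
  exact: (cle_trans hC) h1 (cle_trans hC h2 h3).
split => //; exact: (cle_antisym hC).
Qed.

End Fmap.

Lemma bounded_max n (P : nat -> nat -> Prop) :
  (forall i, (i < n)%N -> exists J, forall m, (J <= m)%N -> P i m) ->
  exists N, forall i, (i < n)%N -> forall m, (N <= m)%N -> P i m.
Proof.
elim: n => [|n IH] H; first by exists 0%N.
have [N HN] := IH (fun i hi => H i (leqW hi)).
have [J HJ] := H n (ltnSn n).
exists (maxn N J) => i; rewrite ltnS leq_eqVlt => /orP [/eqP -> | hi] m hm.
  by apply: HJ; exact: leq_trans (leq_maxr _ _) hm.
by apply: HN => //; exact: leq_trans (leq_maxl _ _) hm.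
Qed.

Lemma tb_cvg (R : realType) (V : completeNormedModType R) (s : nat -> V) (K : R) : 0 <= K ->
  (forall m j n, (m <= j)%N -> (j <= n)%N -> `|s j - s m| <= K * `|s n - s m|) ->
  (forall e : R, 0 < e -> exists n (A : nat -> set V),
     (forall i x y, A i x -> A i y -> `|x - y| <= e) /\
     (forall k, exists i, (i < n)%N /\ A i (s k))) ->
  exists l : V, s @ \oo --> l.
Proof.
move=> K0 hK hTB; apply/cvg_ex; apply: cauchy_cvg; apply: cauchy_exP => eps eps0.
have hK1 : 0 < 2 * (K + 1) by lra.
set e := eps / (2 * (K + 1)).
have e0 : 0 < e by apply: divr_gt0.
have he : e * (2 * (K + 1)) = eps by rewrite /e divfK ?gt_eqF.
have [n [A [hA hcov]]] := hTB e e0.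
have [i [hi hinf]] : exists i, (i < n)%N /\ forall j, exists m, (j <= m)%N /\ A i (s m).
  case: (pselect (exists i, (i < n)%N /\ forall j, exists m, (j <= m)%N /\ A i (s m))) => [//|hno].
  exfalso.
  have : forall i, (i < n)%N -> exists J, forall m, (J <= m)%N -> ~ A i (s m).
    move=> i hi; case: (pselect (exists J, forall m, (J <= m)%N -> ~ A i (s m))) => [//|hJ].
    exfalso; apply: hno; exists i; split => // j.
    case: (pselect (exists m, (j <= m)%N /\ A i (s m))) => [//|hm].
    exfalso; apply: hJ; exists j => m hjm hA'; apply: hm; by exists m.
  move/bounded_max => [N HN]; have [i [hi hAi]] := hcov N.
  exact: (HN i hi N (leqnn N) hAi).
have [m0 [_ hm0]] := hinf 0%N.
exists (s m0); exists m0 => // j /= hj.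
rewrite -ball_normE /= distrC.
have [m [hjm hAm]] := hinf j.
have h1 := hK m0 j m hj hjm.
have h2 := hA _ _ _ hAm hm0.
have h3 : K * `|s m - s m0| <= K * e by apply: ler_wpM2l.
nra.
Qed.

Section Kur.
Local Set Implicit Arguments. Local Unset Strict Implicit.
Variables (R : realType) (V : completeNormedModType R) (f : V -> V).

Lemma kur_shift (dist : V -> V -> R) (s : nat -> V) :
  (forall k, dist (s k) (s k) <= 0) -> (forall k, s k.+1 = f (s k)) ->
  (kuratowski dist (range s) <= kuratowski dist (f @` range s))%E.
Proof.
move=> hd0 hs; apply: ereal_inf_le_tmp => _ [d [d0 [n [A [hsub [hd hcov]]]]] <-].
exists d => //; split => //.
exists n.+1, (fun i => if i is i'.+1 then A i' else [set s 0%N]); split; [|split].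
- case=> [|i] x /=; first by move=> ->; exists 0%N.
  by move=> /hsub [_ [k _ <-] <-]; exists k.+1 => //; rewrite hs.
- case=> [|i] x y /=; last exact: hd.
  by move=> -> ->; apply: le_trans (hd0 _) d0.
- move=> x [k _ <-]; case: k => [|k]; first by exists 0%N.
  have [i [hi hAi]] := hcov (s k.+1) (ex_intro2 _ _ (s k) (ex_intro2 _ _ k I erefl) (esym (hs k))).
  by exists i.+1.
Qed.

Lemma kur_small (dist : V -> V -> R) S : (kuratowski dist S <= 0)%E ->
  forall e : R, 0 < e -> exists n (A : nat -> set V), (forall i, A i `<=` S) /\
    (forall i x y, A i x -> A i y -> dist x y <= e) /\
    (forall x, S x -> exists i, (i < n)%N /\ A i x).
Proof.
move=> h e e0.
have : (kuratowski dist S < e%:E)%E by apply: le_lt_trans h _; rewrite lte_fin.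
move/ereal_inf_lt => [_ [d [d0 [n [A [h1 [h2 h3]]]]] <-]]; rewrite lte_fin => hde.
exists n, A; split => //; split => // i x y hx hy.
by apply: le_trans (h2 _ _ _ hx hy) _; exact: ltW.
Qed.

End Kur.

Section Main.
Local Set Implicit Arguments. Local Unset Strict Implicit.
Variables (R : realType) (V : completeNormedModType R) (C : set V) (f : V -> V).
Hypothesis hC : closed_cone C.
Hypothesis hC0 : C 0.
Hypothesis hf : forall x, interior C x -> interior C (f x).
Hypothesis hop : order_preserving_on C f.
Hypothesis hsub : subhomogeneous_on C f.
Variable K : R.
Hypothesis K0 : 0 <= K.
Hypothesis hK : forall x y, cle C 0 x -> cle C x y -> `|x| <= K * `|y|.
Hypothesis hcomp : [\/ regular_cone C, gamma_condensing C f | tau_condensing C f].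

Lemma near_norm x y (b : R) : C x -> 1 <= b -> cle C (b^-1 *: x) y -> cle C y (b *: x) ->
  `|y - x| <= (2 * K + 1) * (b - 1) * `|x|.
Proof.
move=> Cx b1 h1 h2.
have b0 : 0 < b by lra.
have h0 : cle C 0 (y - b^-1 *: x) by rewrite /cle subr0.
have h3 : cle C (y - b^-1 *: x) ((b - b^-1) *: x).
  by rewrite /cle scalerBl opprB addrA subrK.
have hn := hK h0 h3.
rewrite normrZ in hn.
have hbi : b^-1 <= 1 by rewrite invf_le1.
have hbi0 : 0 < b^-1 by rewrite invr_gt0.
have hbb : b * b^-1 = 1 by rewrite mulfV ?gt_eqF.
rewrite ger0_norm in hn; last by lra.
have hd := ler_distD (b^-1 *: x) y x.
have ee : b^-1 *: x - x = (b^-1 - 1) *: x by rewrite scalerBl scale1r.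
rewrite ee normrZ ler0_norm in hd; last by lra.
have nx := normr_ge0 x.
have : K * ((b - b^-1) * `|x|) <= K * (2 * (b - 1) * `|x|).
  apply: ler_wpM2l => //; apply: ler_wpM2r => //; nra.
have : (1 - b^-1) * `|x| <= (b - 1) * `|x| by apply: ler_wpM2r => //; nra.
lra.
Qed.

Variables (u : V) (Rad r : R).
Hypothesis hu : interior C u.
Hypothesis fu : f u = u.
Hypothesis r0 : 0 < r.
Hypothesis rR : r < Rad.

Let a := expR (- Rad).
Let b := expR Rad.
Let Cu := int_sub hu.

Lemma a0 : 0 < a. Proof. exact: expR_gt0. Qed.
Lemma a1 : a <= 1. Proof. by rewrite /a -expR0 ler_expR; have := r0; have := rR; lra. Qed.
Lemma b1 : 1 <= b. Proof. by rewrite /b -expR0 ler_expR; have := r0; have := rR; lra. Qed.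

Lemma hau : interior C (a *: u). Proof. exact: (int_scale hC a0 hu). Qed.
Lemma hbu : interior C (b *: u). Proof. by apply: (int_scale hC _ hu); have := b1; lra. Qed.

Lemma tc_int z : tcball C u Rad z -> interior C z.
Proof. by move=> [h1 _]; apply: (int_le hC hau h1). Qed.

Lemma fau : cle C (a *: u) (f (a *: u)).
Proof. by have := sub_lo hC hsub hu a0 a1; rewrite fu. Qed.

Lemma fbu : cle C (f (b *: u)) (b *: u).
Proof. by have := hsub hu b1; rewrite fu. Qed.

Lemma tc_inv z : tcball C u Rad z -> tcball C u Rad (f z).
Proof.
move=> hz; have iz := tc_int hz; case: hz => h1 h2; split.
  by apply: (cle_trans hC) fau _; apply: hop => //; exact: hau.
by apply: (cle_trans hC) _ fbu; apply: hop => //; exact: hbu.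
Qed.

Lemma tc_iter k z : tcball C u Rad z -> tcball C u Rad (iter k f z).
Proof. by move=> hz; elim: k => //= k IH; apply: tc_inv. Qed.

Lemma ab : a <= b. Proof. by have := a1; have := b1; lra. Qed.

Lemma tc_au : tcball C u Rad (a *: u).
Proof. split; [exact: cle_refl | exact: (cle_sc hC Cu ab)]. Qed.
Lemma tc_bu : tcball C u Rad (b *: u).
Proof. split; [exact: (cle_sc hC Cu ab) | exact: cle_refl]. Qed.

Let xs k := iter k f (a *: u).
Let ys k := iter k f (b *: u).

Lemma xs_in k : tcball C u Rad (xs k). Proof. exact: (tc_iter _ tc_au). Qed.
Lemma ys_in k : tcball C u Rad (ys k). Proof. exact: (tc_iter _ tc_bu). Qed.

Lemma xs_step k : cle C (xs k) (xs k.+1).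
Proof. by rewrite /xs iterSr; apply: iter_mono => //; [exact: hau | apply: hf; exact: hau | exact: fau]. Qed.
Lemma ys_step k : cle C (ys k.+1) (ys k).
Proof. by rewrite /ys iterSr; apply: iter_mono => //; [apply: hf; exact: hbu | exact: hbu | exact: fbu]. Qed.

Lemma tc_bound z : tcball C u Rad z -> `|z| <= K * `|b *: u - a *: u| + `|a *: u|.
Proof.
move=> [h1 h2].
have h0 : cle C 0 (z - a *: u) by rewrite /cle subr0.
have h3 : cle C (z - a *: u) (b *: u - a *: u).
  by rewrite /cle opprB addrA subrK.
have hn := hK h0 h3.
have hd := ler_distD (a *: u) z 0.
rewrite !subr0 in hd.
lra.
Qed.

Lemma tc_th z w : tcball C u Rad z -> tcball C u Rad w -> thompson C z w <= ln (b / a).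
Proof.
move=> [hz1 hz2] [hw1 hw2].
have ha := a0; have hb : 0 < b by have := b1; lra.
have hba : 1 <= b / a by rewrite ler_pdivlMr // mul1r; exact: ab.
apply: th_le => //.
- apply: (cle_trans hC) _ hw1.
  have := cle_scale hC (_ : 0 <= (b / a)^-1) hz2; rewrite scalerA.
  have -> : (b / a)^-1 * b = a by rewrite invf_div divfK ?gt_eqF.
  by apply; rewrite invr_ge0 ltW // divr_gt0.
- apply: (cle_trans hC) hw2 _.
  have := cle_scale hC (_ : 0 <= b / a) hz1; rewrite scalerA.
  have -> : b / a * a = b by rewrite divfK ?gt_eqF.
  by apply; apply/ltW/divr_gt0.
Qed.

Lemma xs_int k : interior C (xs k). Proof. exact: tc_int (xs_in k). Qed.
Lemma ys_int k : interior C (ys k). Proof. exact: tc_int (ys_in k). Qed.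

Lemma gen_cvg (s : nat -> V) : (forall k, s k.+1 = f (s k)) ->
  (forall k, tcball C u Rad (s k)) ->
  (forall m j n, (m <= j)%N -> (j <= n)%N -> `|s j - s m| <= K * `|s n - s m|) ->
  gamma_condensing C f \/ tau_condensing C f ->
  exists l : V, s @ \oo --> l.
Proof.
move=> hs hin hmon hgt; have K0' := K0.
have hint : range s `<=` interior C by move=> _ [k _ <-]; exact: tc_int.
apply: tb_cvg K0 hmon _ => e e0.
case: hgt => [[_ hg] | [_ ht]].
- have gz : (gamma_mnc (range s) <= 0)%E.
    rewrite leNgt; apply/negP => hpos.
    have nb : norm_bounded (range s).
      by exists (K * `|b *: u - a *: u| + `|a *: u|) => _ [k _ <-]; exact: tc_bound.
    have dd : forall k, `|s k - s k| <= 0 by move=> k; rewrite subrr normr0.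
    have := hg (range s) hint nb hpos.
    by rewrite ltNge /gamma_mnc (kur_shift dd hs).
  have [n [A [h1 [h2 h3]]]] := kur_small gz e0.
  exists n, A; split => // k; apply: h3; by exists k.
- set B := K * `|b *: u - a *: u| + `|a *: u|.
  have hB : 0 < (2 * K + 1) * (`|B| + 1) by apply: mulr_gt0; [lra | have := normr_ge0 B; lra].
  set eta := e / ((2 * K + 1) * (`|B| + 1)).
  have eta0 : 0 < eta by apply: divr_gt0.
  have heta : eta * ((2 * K + 1) * (`|B| + 1)) = e by rewrite /eta divfK ?gt_eqF.
  have hl : 0 < ln (1 + eta) by apply: ln_gt0; lra.
  set d := ln (1 + eta) / 2.
  have d0 : 0 < d by apply: divr_gt0.
  have gz : (tau_mnc C (range s) <= 0)%E.
    rewrite leNgt; apply/negP => hpos.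
    have nb : thompson_bounded C (range s).
      by exists (ln (b / a)) => _ _ [k _ <-] [j _ <-]; exact: tc_th.
    have dd : forall k, thompson C (s k) (s k) <= 0.
      move=> k; have := @th_le _ _ C (s k) (s k) 1 (lexx _).
      by rewrite invr1 scale1r ln1; apply; exact: cle_refl.
    have := ht (range s) hint nb hpos.
    by rewrite ltNge /tau_mnc (kur_shift dd hs).
  have [n [A [h1 [h2 h3]]]] := kur_small gz d0.
  exists n, A; split; last by move=> k; apply: h3; exists k.
  move=> i x y hx hy.
  have [k _ hk] := h1 _ _ hx; have [j _ hj] := h1 _ _ hy.
  have tx := hin k; have ty := hin j; rewrite hk in tx; rewrite hj in ty.
  have ix := tc_int tx; have iy := tc_int ty.
  have hxy := h2 _ _ _ hx hy.
  have : thompson C x y < ln (1 + eta) by rewrite /d in hxy; lra.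
  move=> /(th_lt hC ix iy) [be [be1 be2 be3 be4]].
  rewrite lnK ?posrE in be2; last by lra.
  have hn := near_norm (int_sub ix) be1 be3 be4.
  have bx := tc_bound tx.
  have nB : B <= `|B| := ler_norm B.
  rewrite distrC; apply: (le_trans hn).
  have nx := normr_ge0 x.
  have : (2 * K + 1) * (be - 1) * `|x| <= (2 * K + 1) * eta * `|B|.
    apply: ler_pM; [nra | done | nra | ].
    by apply: le_trans bx _; exact: nB.
  nra.
Qed.

Lemma seqs_cvg : (exists lx : V, xs @ \oo --> lx) /\ (exists ly : V, ys @ \oo --> ly).
Proof.
have xs_mono := mono_inc hC hC0 xs_step.
have ys_mono := mono_dec hC hC0 ys_step.
have hmx : forall m j n, (m <= j)%N -> (j <= n)%N -> `|xs j - xs m| <= K * `|xs n - xs m|.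
  move=> m j n hmj hjn; apply: hK; first by rewrite /cle subr0; exact: xs_mono.
  by rewrite /cle opprB addrA subrK; exact: xs_mono.
have hmy : forall m j n, (m <= j)%N -> (j <= n)%N -> `|ys j - ys m| <= K * `|ys n - ys m|.
  move=> m j n hmj hjn; rewrite distrC [`|ys n - _|]distrC.
  apply: hK; first by rewrite /cle subr0; exact: ys_mono.
  by rewrite /cle opprB addrC addrA subrK; exact: ys_mono.
have hxs : forall k, xs k.+1 = f (xs k) by move=> k; rewrite /xs iterS.
have hys : forall k, ys k.+1 = f (ys k) by move=> k; rewrite /ys iterS.
case: hcomp => [hreg | hg | ht].
- split.
    pose w k := b *: u - xs k.
    have wstep : forall k, cle C (w k.+1) (w k).
      by move=> k; rewrite /cle /w opprB addrC addrA subrK; exact: xs_step.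
    have [l hl] := hreg w (fun k => (xs_in k).2) wstep.
    exists (b *: u - l).
    have -> : xs = (fun k => b *: u - w k).
      by apply: funext => k; rewrite /w opprB addrC subrK.
    exact: (cvgB (cvg_cst _) hl).
  exact: hreg ys (fun k => int_sub (ys_int k)) ys_step.
- by split; [apply: (gen_cvg hxs xs_in hmx) | apply: (gen_cvg hys ys_in hmy)]; left.
- by split; [apply: (gen_cvg hxs xs_in hmx) | apply: (gen_cvg hys ys_in hmy)]; right.
Qed.

Lemma part1 : fixpts C f `<=` tball C u r ->
  exists k, forall y, tcball C u Rad y -> tball C u r (iter k f y).
Proof.
move=> hfix.
have [[lx hlx] [ly hly]] := seqs_cvg.
have hxs : forall k, xs k.+1 = f (xs k) by move=> k; rewrite /xs iterS.
have hys : forall k, ys k.+1 = f (ys k) by move=> k; rewrite /ys iterS.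
have [ilx flx hxl happx] := fix_inc hC hC0 hop hsub xs_int hxs xs_step hlx.
have hlo : forall k, cle C (a *: u) (ys k) := fun k => (ys_in k).1.
have [ily fly hyl happy] := fix_dec hC hC0 hop hsub hau hlo ys_int hys ys_step hly.
have [_ tlx] := hfix lx (conj ilx flx).
have [_ tly] := hfix ly (conj ily fly).
have [b1' [hb11 hb12 hb13 hb14]] := th_lt hC hu ilx tlx.
have [b2' [hb21 hb22 hb23 hb24]] := th_lt hC hu ily tly.
set M := Num.max b1' b2'.
have M1 : b1' <= M by rewrite le_max lexx.
have M2 : b2' <= M by rewrite le_max lexx orbT.
have Mr : M < expR r by rewrite gt_max hb12 hb22.
have M0 : 1 <= M by lra.
set q := expR r / M.
have hq : q * M = expR r by rewrite /q divfK ?gt_eqF //; lra.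
have q1 : 1 < q by nra.
set c := (1 + q) / 2.
have c1 : 1 < c by rewrite /c; lra.
have c0 : 0 < c by lra.
have cM : c * M < expR r.
  have -> : c * M = (M + q * M) / 2 by rewrite /c; field.
  lra.
have [N1 hN1] := happx c c1.
have [N2 hN2] := happy c c1.
exists (maxn N1 N2) => y hy.
set k := maxn N1 N2.
have tw := tc_iter k hy.
have iw := tc_int tw.
have lo : cle C (xs k) (iter k f y) := iter_mono hf hop k hau (tc_int hy) hy.1.
have hi : cle C (iter k f y) (ys k) := iter_mono hf hop k (tc_int hy) hbu hy.2.
split => //.
have cMge : 1 <= c * M by nra.
have ci : 0 <= c^-1 by rewrite invr_ge0 ltW.
apply: (@le_lt_trans _ _ (ln (c * M))).
  apply: th_le => //.
  - apply: (cle_trans hC) _ lo.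
    apply: (@cle_trans _ _ C hC _ (c^-1 *: lx)); last first.
      have := cle_scale hC ci (hN1 k (leq_maxl _ _)).
      by rewrite scalerA mulVf ?gt_eqF // scale1r.
    apply: (@cle_trans _ _ C hC _ (c^-1 *: (b1'^-1 *: u))); last exact: cle_scale.
    rewrite scalerA; apply: (cle_sc hC Cu).
    rewrite -invfM lef_pV2 ?posrE; nra.
  - apply: (cle_trans hC) hi _.
    apply: (cle_trans hC) (hN2 k (leq_maxr _ _)) _.
    apply: (@cle_trans _ _ C hC _ (c *: (b2' *: u))); first exact: (cle_scale hC (ltW c0) hb24).
    rewrite scalerA; apply: (cle_sc hC Cu); nra.
rewrite -[X in _ < X](expRK r) ltr_ln ?posrE //; lra.
Qed.

End Main.

Theorem lemma4p3 (R : realType) (V : completeNormedModType R) (C : set V)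
  (f : V -> V)
  (hC : closed_cone C) (hnormal : normal_cone C)
  (hint : exists x, interior C x)
  (hf : forall x, interior C x -> interior C (f x))
  (hop : order_preserving_on C f) (hsub : subhomogeneous_on C f)
  (hcomp : [\/ regular_cone C, gamma_condensing C f | tau_condensing C f]) :
  (forall u : V, interior C u -> f u = u ->
     thompson_bounded C (fixpts C f) ->
     forall Rad r : R, 0 < r -> r < Rad -> fixpts C f `<=` tball C u r ->
       exists k : nat, forall y, tcball C u Rad y -> tball C u r (iter k f y))
  /\
  (forall u : V, fixpts C f = [set u]%classic ->
     forall x, interior C x ->
       (fun k => thompson C (iter k f x) u) @ \oo --> 0 /\
       (fun k => iter k f x) @ \oo --> u).
Proof.
have hC0 : C 0.
  case: hint => x hx; have := Cscale hC (int_sub hx) (lexx (0 : R)).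
  by rewrite scale0r.
case: hnormal => K hK.
have K0 : 0 <= `|K| := normr_ge0 K.
have hK1 : forall x y, cle C 0 x -> cle C x y -> `|x| <= `|K| * `|y|.
  move=> x y h1 h2; apply: le_trans (hK _ _ h1 h2) _.
  by apply: ler_wpM2r; [exact: normr_ge0 | exact: ler_norm].
split.
  move=> u hu fu _ Rad r r0 rR hfix.
  exact: (part1 hC hC0 hf hop hsub K0 hK1 hcomp hu fu r0 rR hfix).
move=> u hfixu x hx.
have [iu fu] : interior C u /\ f u = u by have : fixpts C f u by rewrite hfixu.
have Cu := int_sub iu.
have [be [be1 hbe1 hbe2]] := comparable hC iu hx.
set Rad := be + 1.
have hR := expR_ge1Dx Rad.
have xin : tcball C u Rad x.
  split.
    apply: (cle_trans hC) _ hbe1; apply: (cle_sc hC Cu).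
    rewrite expRN lef_pV2 ?posrE ?expR_gt0 //; rewrite /Rad in hR *; lra.
  apply: (cle_trans hC) hbe2 _; apply: (cle_sc hC Cu); rewrite /Rad in hR *; lra.
have key : forall r : R, 0 < r -> r < 1 -> exists N, forall k, (N <= k)%N ->
    tball C u r (iter k f x).
  move=> r r0 r1; have rR : r < Rad by rewrite /Rad; lra.
  have hfix : fixpts C f `<=` tball C u r.
    move=> z; rewrite hfixu => ->; split => //.
    apply: (@le_lt_trans _ _ (ln 1)); last by rewrite ln1.
    by have := @th_le _ _ C u u 1 (lexx _); rewrite invr1 scale1r; apply; exact: cle_refl.
  have [k0 hk0] := part1 hC hC0 hf hop hsub K0 hK1 hcomp iu fu r0 rR hfix.
  exists k0 => k hk; rewrite -(subnK hk) addnC iterD; apply: hk0.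
  exact: (tc_iter hC hop hsub iu fu r0 rR (k - k0) xin).
have close : forall r : R, 0 < r -> r < 1 -> exists N, forall k, (N <= k)%N ->
    exists b, [/\ 1 <= b, b < expR r, cle C (b^-1 *: u) (iter k f x),
      cle C (iter k f x) (b *: u) & interior C (iter k f x)].
  move=> r r0 r1; have [N HN] := key r r0 r1; exists N => k hk.
  have [iw tw] := HN k hk.
  have [b' [h1 h2 h3 h4]] := th_lt hC iu iw tw.
  by exists b'.
split.
  apply/cvgrPdist_lt => e e0.
  set r := Num.min (e / 2) (2^-1).
  have r0 : 0 < r by rewrite lt_min; apply/andP; split; [apply: divr_gt0 | rewrite invr_gt0].
  have re : r <= e / 2 by rewrite ge_min lexx.
  have r1 : r <= 2^-1 by rewrite ge_min lexx orbT.
  have r1' : r < 1 by lra.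
  have [N HN] := close r r0 r1'.
  exists N => // k /= hk.
  have [b' [h1 h2 h3 h4 iw]] := HN k hk.
  have b0 : 0 < b' by lra.
  have [s1 s2] := swap hC b0 h3 h4.
  have t1 := th_le h1 s1 s2.
  have t0 := th_ge0 hC iw iu.
  have lb : ln b' < r.
    by rewrite -[X in _ < X](expRK r) ltr_ln ?posrE ?expR_gt0 //; lra.
  rewrite sub0r normrN ger0_norm //; lra.
apply/cvgrPdist_lt => e e0.
have hD : 0 < (2 * `|K| + 1) * (`|u| + 1) by apply: mulr_gt0; [lra | have := normr_ge0 u; lra].
set eta := Num.min (e / ((2 * `|K| + 1) * (`|u| + 1))) (2^-1).
have eta0 : 0 < eta.
  by rewrite lt_min; apply/andP; split; [apply: divr_gt0 | rewrite invr_gt0].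
have etae : eta <= e / ((2 * `|K| + 1) * (`|u| + 1)) by rewrite ge_min lexx.
have eta1 : eta <= 2^-1 by rewrite ge_min lexx orbT.
have etaD : eta * ((2 * `|K| + 1) * (`|u| + 1)) <= e.
  by rewrite -ler_pdivlMr.
set r := ln (1 + eta).
have r0 : 0 < r by apply: ln_gt0; lra.
have r1 : r < 1.
  rewrite /r -[X in _ < X](expRK 1) ltr_ln ?posrE ?expR_gt0 //; last by lra.
  have := expR_ge1Dx (1 : R); lra.
have [N HN] := close r r0 r1.
exists N => // k /= hk.
have [b' [h1 h2 h3 h4 iw]] := HN k hk.
rewrite /r lnK ?posrE in h2; last by lra.
have hn := near_norm K0 hK1 Cu h1 h3 h4.
rewrite distrC; apply: (le_lt_trans hn).
have nu := normr_ge0 u.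
have : (2 * `|K| + 1) * (b' - 1) * `|u| <= (2 * `|K| + 1) * (b' - 1) * (`|u| + 1).
  by apply: ler_wpM2l; [nra | lra].
have : (2 * `|K| + 1) * (b' - 1) * (`|u| + 1) < (2 * `|K| + 1) * eta * (`|u| + 1).
  have h0 : 0 < `|u| + 1 by lra.
  have h00 : 0 < 2 * `|K| + 1 by lra.
  by rewrite ltr_pM2r // ltr_pM2l //; lra.
nra.
Qed.
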